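(* For integers $n \ge k \ge 1$, let $\Gamma(n,k)$ denote the maximum number of edges of a (simple, undirected) graph $G$ on $n$ vertices, taken over all such graphs $G$ together with $k$ vertex-disjoint directed paths $P_1,\ldots,P_k$ in $G$ covering $V(G)$, subject to the constraint that the digraph $D(G,P_1,\ldots,P_k)$ is acyclic. Then $\Gamma(n,k) = kn - \binom{k+1}{2}$ for all integers $n \ge k \ge 1$.
   Context: Graphs are finite, simple and undirected; $xy$ denotes an edge and $y \sim z$ means $y$ and $z$ are adjacent in $G$. A directed path in $G$ is a sequence $v_1 \to v_2 \to \cdots \to v_m$ ($m \ge 1$; a path with $m=1$ is trivial) of distinct vertices of $G$ with $v_t v_{t+1} \in E(G)$ for each $t$; its arcs are $v_t \to v_{t+1}$. The paths $P_1,\ldots,P_k$ are vertex-disjoint and cover $V(G)$, i.e. every vertex of $G$ lies in exactly one $P_j$. The digraph $D = D(G,P_1,\ldots,P_k)$ has vertex set $V(G)$, and for distinct vertices $x,y$ there is an arc $x \to y$ in $D$ if and only if either some path $P_j$ contains the arc $x \to y$, or there is a vertex $z$ and a path $P_j$ such that $x \to z$ is an arc of $P_j$ and $y \sim z$ in $G$. $D$ is acyclic if it contains no directed cycle. *)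

(* Defs.v *)
From mathcomp Require Import all_boot.
Set Implicit Arguments. Unset Strict Implicit. Unset Printing Implicit Defensive.

Definition simple_graph (n : nat) (e : rel 'I_n) : Prop :=
  (forall x y, e x y = e y x) /\ (forall x, ~~ e x x).

Definition num_edges (n : nat) (e : rel 'I_n) : nat :=
  #|[set p : 'I_n * 'I_n | e p.1 p.2 && (p.1 < p.2)%N]|.

Definition path_arc (T : Type) (s : seq T) (x y : T) : Prop :=
  exists s1 s2, s = s1 ++ x :: y :: s2.

Definition is_dpath (n : nat) (e : rel 'I_n) (s : seq 'I_n) : Prop :=
  s <> [::] /\ uniq s /\ (forall x y, path_arc s x y -> e x y).

Definition path_cover (n k : nat) (e : rel 'I_n) (P : 'I_k -> seq 'I_n) : Prop :=
  (forall j, is_dpath e (P j)) /\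
  (forall v : 'I_n, exists! j : 'I_k, v \in P j).

Definition D_arc (n k : nat) (e : rel 'I_n) (P : 'I_k -> seq 'I_n) (x y : 'I_n) : Prop :=
  x <> y /\
  ((exists j, path_arc (P j) x y) \/
   (exists z j, path_arc (P j) x z /\ e y z)).

Definition directed_cycle (T : eqType) (A : T -> T -> Prop) (s : seq T) : Prop :=
  match s with
  | [::] => False
  | x0 :: _ => uniq s /\
      forall i, (i < size s)%N -> A (nth x0 s i) (nth x0 s ((i.+1) %% size s))
  end.

Definition acyclic (T : eqType) (A : T -> T -> Prop) : Prop :=
  forall s : seq T, ~ directed_cycle A s.

Definition admissible (n k : nat) (e : rel 'I_n) (P : 'I_k -> seq 'I_n) : Prop :=
  simple_graph e /\ path_cover e P /\ acyclic (D_arc e P).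

(* Main.v *)
Require Import Defs.
From mathcomp Require Import all_boot zify.
From Stdlib Require Import ClassicalEpsilon.
Set Implicit Arguments. Unset Strict Implicit. Unset Printing Implicit Defensive.

Lemma arc_nth (T : Type) (x0 : T) (s : seq T) x y :
  path_arc s x y -> exists i, i.+1 < size s /\ x = nth x0 s i /\ y = nth x0 s i.+1.
Proof.
case=> s1 [s2 ->]; exists (size s1); rewrite size_cat /= !nth_cat ltnn subnn.
have -> : (size s1).+1 < size s1 = false by lia.
rewrite subSn // subnn; split=> //; lia.
Qed.

Lemma nth_arc (T : Type) (x0 : T) (s : seq T) i :
  i.+1 < size s -> path_arc s (nth x0 s i) (nth x0 s i.+1).
Proof.
move=> hi; exists (take i s), (drop i.+2 s).
rewrite -[s in LHS](cat_take_drop i) (drop_nth x0) ?(drop_nth x0 (n:=i.+1)) //; lia.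
Qed.

Lemma acyc_rank (T : eqType) (A : T -> T -> Prop) (f : T -> nat) :
  (forall x y, A x y -> f x < f y) -> acyclic A.
Proof.
move=> hf [|x0 s'] //= [_ hA].
have key : forall i, i < size (x0 :: s') -> f (nth x0 (x0 :: s') 0) <= f (nth x0 (x0 :: s') i).
  elim=> [|i IH] hi //.
  have := hA i (ltnW hi); rewrite modn_small // => /hf.
  have := IH (ltnW hi). lia.
have := hA (size s').
rewrite /= ltnSn modnn => /(_ isT) /hf.
have := key (size s') (ltnSn _).
lia.
Qed.

Lemma sum_min k n : 0 < k -> k <= n -> \sum_(i < n) minn k i + 'C(k.+1, 2) = k * n.
Proof.
move=> hk; elim: n => [|n IH]; first lia.
rewrite leq_eqVlt => /orP [/eqP <-|hkn].
  have C2 : forall m, 'C(m,2) * 2 = m * m.-1.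
    elim=> [|m IHm] //; rewrite binS bin1; case: m IHm => [|m] //= IHm; lia.
  rewrite (eq_bigr (fun i : 'I_k => nat_of_ord i)); last first.
    by move=> i _; apply/minn_idPr; rewrite ltnW.
  rewrite -(big_mkord xpredT (fun i => i)) bin2_sum binS bin1.
  have := C2 k; case: (k) hk => [|kk] //= _; move: ('C(kk.+1, 2)) => c; clear; nia.
rewrite big_ord_recr /=.
have := IH hkn; have -> : minn k n = k by apply/minn_idPl.
rewrite mulnS; set S := \sum_(i < n) _; lia.
Qed.



Definition Db n k (e : rel 'I_n) (P : 'I_k -> seq 'I_n) : rel 'I_n :=
  fun x y => if excluded_middle_informative (D_arc e P x y) then true else false.

Lemma DbP n k (e : rel 'I_n) (P : 'I_k -> seq 'I_n) x y : Db e P x y <-> D_arc e P x y.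
Proof. by rewrite /Db; case: excluded_middle_informative. Qed.

Lemma no_cycle n k (e : rel 'I_n) (P : 'I_k -> seq 'I_n) x z :
  acyclic (D_arc e P) -> Db e P x z -> connect (Db e P) z x -> False.
Proof.
move=> hac hxz /connectP [p hp hl].
case: (shortenP hp) hl => p' hp' hu _ hl.
apply: (hac (z :: p')); split => // i hi.
case: (ltnP i.+1 (size (z :: p'))) => h.
  rewrite modn_small //; apply/DbP.
  by move/pathP: hp' => /(_ z i); apply.
have hi' : i = size p' by apply/eqP; rewrite eqn_leq; apply/andP; split; [exact: hi | exact: h].
rewrite hi' /= modnn /=; apply/DbP.
by rewrite -[X in nth _ _ X]/((size (z :: p')).-1) nth_last /= -hl.
Qed.

Definition Tr n k (e : rel 'I_n) (P : 'I_k -> seq 'I_n) x y :=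
  [exists w, Db e P x w && connect (Db e P) w y].

Lemma Tr_trans n k (e : rel 'I_n) (P : 'I_k -> seq 'I_n) x y w :
  Tr e P x y -> Tr e P y w -> Tr e P x w.
Proof.
move=> /existsP [z /andP [h1 h2]] /existsP [z' /andP [h3 h4]].
apply/existsP; exists z; rewrite h1 /=.
apply: (connect_trans h2); apply: (connect_trans _ h4); exact: connect1.
Qed.

Lemma Tr_irr n k (e : rel 'I_n) (P : 'I_k -> seq 'I_n) x :
  acyclic (D_arc e P) -> ~~ Tr e P x x.
Proof.
move=> hac; apply/negP => /existsP [z /andP [h1 h2]]; exact: (no_cycle hac h1 h2).
Qed.

Lemma Tr_conn n k (e : rel 'I_n) (P : 'I_k -> seq 'I_n) x y :
  x != y -> connect (Db e P) x y -> Tr e P x y.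
Proof.
move=> hne /connectP [[|w p] /=]; first by move=> _ h; rewrite h eqxx in hne.
move=> /andP [h1 h2] hl; apply/existsP; exists w; rewrite h1 /=.
by apply/connectP; exists p.
Qed.

Definition rk n k (e : rel 'I_n) (P : 'I_k -> seq 'I_n) x :=
  #|[set w | Tr e P w x]| * n + x.

Lemma rk_lt n k (e : rel 'I_n) (P : 'I_k -> seq 'I_n) x y :
  acyclic (D_arc e P) -> Tr e P x y -> rk e P x < rk e P y.
Proof.
move=> hac hxy.
have : #|[set w | Tr e P w x]| < #|[set w | Tr e P w y]|.
  apply: proper_card; apply/properP; split.
    by apply/subsetP => w; rewrite !inE => h; apply: Tr_trans h hxy.
  by exists x; rewrite !inE // Tr_irr.
rewrite /rk; have := ltn_ord x; have := ltn_ord y.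
move: #|_| #|_| => a b; nia.
Qed.

Lemma rk_inj n k (e : rel 'I_n) (P : 'I_k -> seq 'I_n) : injective (rk e P).
Proof.
move=> x y h; apply: val_inj.
have := congr1 (modn^~ n) h; rewrite /rk !modnMDl !modn_small //.
Qed.

Lemma path_conn n k (e : rel 'I_n) (P : 'I_k -> seq 'I_n) j x0 i1 i2 :
  uniq (P j) -> i1 <= i2 -> i2 < size (P j) ->
  connect (Db e P) (nth x0 (P j) i1) (nth x0 (P j) i2).
Proof.
move=> hu; elim: i2 => [|i2 IH].
  by rewrite leqn0 => /eqP -> _.
rewrite leq_eqVlt => /orP [/eqP -> //|hlt] hs.
apply: (connect_trans (IH hlt (ltnW hs))); apply: connect1; apply/DbP.
split; last by left; exists j; apply: nth_arc.
by move/eqP; rewrite nth_uniq //; [lia | exact: ltnW].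
Qed.

Lemma pair_card (T : finType) (Q : T -> T -> bool) :
  #|[set p : T * T | Q p.1 p.2]| = \sum_a #|[set b | Q a b]|.
Proof.
rewrite -sum1_card (eq_bigl (fun p => Q p.1 p.2)); last by move=> p; rewrite inE.
rewrite big_mkcond /=.
rewrite -(pair_big xpredT xpredT (fun a b => if Q a b then 1 else 0)) /=.
apply: eq_bigr => a _; rewrite -sum1_card [RHS]big_mkcond /=.
by apply: eq_bigr => b _; rewrite inE.
Qed.

Lemma card_gt (T : finType) (g : T -> nat) a b :
  g a < g b -> #|[set w | g b < g w]| < #|[set w | g a < g w]|.
Proof.
move=> h; apply: proper_card; apply/properP; split.
  by apply/subsetP => w; rewrite !inE => h2; apply: ltn_trans h h2.
by exists b; rewrite !inE // ltnn.
Qed.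

Lemma later_le_k n k (e : rel 'I_n) (P : 'I_k -> seq 'I_n) (hk : 0 < k) a :
  admissible e P -> #|[set b | e a b && (rk e P a < rk e P b)]| <= k.
Proof.
case=> [[hsym hirr] [[hpath hcov] hac]].
pose J b : 'I_k := odflt (Ordinal hk) [pick j | b \in P j].
have hJ b : b \in P (J b).
  rewrite /J; case: pickP => [j //|hn].
  by case: (hcov b) => j [hj _]; rewrite hn in hj.
have claim : forall j b1 b2, b1 \in P j -> b2 \in P j ->
    index b1 (P j) < index b2 (P j) -> e a b2 -> rk e P a < rk e P b1 -> False.
  move=> j b1 b2 hb1 hb2 hlt eab2 r1.
  have hu : uniq (P j) by case: (hpath j) => _ [].
  move: hlt; case hi2 : (index b2 (P j)) => [//|m] hlt.
  have hs : m.+1 < size (P j) by rewrite -hi2 index_mem.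
  pose x := nth a (P j) m.
  have harc : path_arc (P j) x b2.
    by rewrite -(nth_index a hb2) hi2; apply: nth_arc.
  have hc : connect (Db e P) b1 x.
    rewrite -{1}(nth_index a hb1); apply: path_conn => //; lia.
  have hxa : connect (Db e P) x a.
    case: (eqVneq x a) => [->|hne]; first exact: connect0.
    apply: connect1; apply/DbP; split; first by apply/eqP.
    by right; exists b2, j.
  have hne : b1 != a by apply/eqP => eb; rewrite eb ltnn in r1.
  have := rk_lt hac (Tr_conn hne (connect_trans hc hxa)).
  lia.
have Jinj : {in [set b | e a b && (rk e P a < rk e P b)] &, injective J}; last first.
  rewrite -(card_in_imset Jinj); apply: leq_trans (max_card _) _; by rewrite card_ord.
move=> b1 b2; rewrite !inE => /andP [e1 r1] /andP [e2 r2] hJ12.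
have hb1 := hJ b1; have hb2 := hJ b2; rewrite -hJ12 in hb2.
case: (ltngtP (index b1 (P (J b1))) (index b2 (P (J b1)))) => h.
- by case: (claim _ _ _ hb1 hb2 h e2 r1).
- by case: (claim _ _ _ hb2 hb1 h e1 r2).
- by rewrite -(nth_index a hb1) h nth_index.
Qed.

Lemma upper n k (e : rel 'I_n) (P : 'I_k -> seq 'I_n) :
  0 < k -> k <= n -> admissible e P -> num_edges e <= k * n - 'C(k.+1, 2).
Proof.
move=> hk hkn ha.
have [[hsym hirr] [_ hac]] := ha.
set r := rk e P.
pose h (p : 'I_n * 'I_n) := if r p.1 < r p.2 then p else (p.2, p.1).
have step1 : num_edges e <= #|[set p : 'I_n * 'I_n | e p.1 p.2 && (r p.1 < r p.2)]|.
  rewrite /num_edges -(card_in_imset (f:=h)).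
    apply: subset_leq_card; apply/subsetP => q /imsetP [[p1 p2] hp ->].
    move: hp; rewrite !inE /h /= => /andP [hp hlt].
    case: ifP => hr; rewrite /= ?hp ?hr // hsym hp /=.
    rewrite ltn_neqAle leqNgt hr andbT; apply/negP => /eqP /rk_inj eq12.
    by rewrite eq12 ltnn in hlt.
  move=> [p1 p2] [q1 q2]; rewrite !inE /h /= => /andP [_ hp] /andP [_ hq].
  case: ifP => _; case: ifP => _ // [e1 e2]; rewrite e1 e2 // in hp *; lia.
pose f a := #|[set b | r a < r b]|.
have fl a : f a < n.
  have : f a <= #|[set~ a]|.
    apply: subset_leq_card; apply/subsetP => b; rewrite !inE.
    by apply: contraL => /eqP ->; rewrite ltnn.
  rewrite cardsC1 card_ord; have := ltn_ord a; lia.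
pose F a : 'I_n := Ordinal (fl a).
have Finj : injective F.
  move=> a b /(congr1 val) /= hf.
  case: (ltngtP (r a) (r b)) => hab.
  - by have := card_gt hab; rewrite -/(f a) -/(f b) hf ltnn.
  - by have := card_gt hab; rewrite -/(f a) -/(f b) hf ltnn.
  - exact: rk_inj hab.
have step2 : #|[set p : 'I_n * 'I_n | e p.1 p.2 && (r p.1 < r p.2)]|
    <= \sum_(i < n) minn k i.
  rewrite (pair_card (fun x y => e x y && (r x < r y))) [X in _ <= X](reindex_inj Finj) /=.
  apply: leq_sum => a _; rewrite leq_min; apply/andP; split.
    exact: later_le_k.
  apply: subset_leq_card; apply/subsetP => b; rewrite !inE => /andP [].
  done.
have := sum_min hk hkn.
lia.
Qed.

Lemma cnt a k m : \sum_(0 <= b < m) (if (a < b <= a + k) then 1 else 0) = minn k (m - a.+1).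
Proof.
elim: m => [|m IH]; first by rewrite big_geq //; lia.
rewrite big_nat_recr //= IH.
case: (ltnP a m) => h1; case: (leqP m (a + k)) => h2 /=; lia.
Qed.

Lemma card_int N a k : #|[set b : 'I_N | a < b <= a + k]| = minn k (N - a.+1).
Proof.
rewrite -sum1_card big_mkcond /=.
rewrite (eq_bigr (fun b : 'I_N => if (a < b <= a + k) then 1 else 0)); last first.
  by move=> b _; rewrite inE.
by rewrite -(big_mkord xpredT (fun b => if (a < b <= a + k) then 1 else 0)) cnt.
Qed.

Lemma lower n k : 0 < k -> k <= n ->
  exists (e : rel 'I_n) (P : 'I_k -> seq 'I_n),
      admissible e P /\ num_edges e = (k * n - 'C(k.+1, 2))%N.
Proof.
case: n => [|n'] hk hkn; first lia.
pose e : rel 'I_n'.+1 := fun a b => (a != b) && (a <= b + k) && (b <= a + k).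
pose c (r : nat) := (n' - r) %/ k + 1.
pose P (r : 'I_k) : seq 'I_n'.+1 := [seq inord (r + i * k) | i <- iota 0 (c r)].
have rle (r : 'I_k) : r <= n' by have := ltn_ord r; lia.
have hc (r : 'I_k) i : (i < c r) = (r + i * k <= n').
  have := rle r; rewrite /c addn1 ltnS leq_divRL // => hr; apply/idP/idP; lia.
have hv (r : 'I_k) i : i < c r -> nat_of_ord (inord (r + i * k) : 'I_n'.+1) = r + i * k.
  by rewrite hc => h; rewrite inordK.
have hmem (r : 'I_k) (v : 'I_n'.+1) : (v \in P r) = (v %% k == r).
  apply/mapP/eqP.
    case=> i; rewrite mem_iota add0n => /andP [_ hi] ->.
    by rewrite (hv r i hi) addnC modnMDl modn_small.
  move=> hvk; have hd := divn_eq v k; have hvn := ltn_ord v.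
  have hi : v %/ k < c r by rewrite hc; lia.
  exists (v %/ k); first by rewrite mem_iota add0n.
  apply: val_inj => /=; rewrite hv //; lia.
have hnth (r : 'I_k) i : i < c r -> nth ord0 (P r) i = inord (r + i * k).
  by move=> hi; rewrite (nth_map 0) ?size_iota // nth_iota.
have harc (r : 'I_k) x y : path_arc (P r) x y -> nat_of_ord y = x + k.
  case/(arc_nth ord0) => i []; rewrite size_map size_iota => hi [-> ->].
  rewrite !hnth ?hv //; try exact: ltnW.
  rewrite mulSn; lia.
exists e, P; split; first split.
- split.
    move=> x y; rewrite /e (eq_sym x y).
    by case: (x <= y + k); case: (y <= x + k); rewrite ?andbT ?andbF.
  by move=> x; rewrite /e eqxx.
- split; first split.
  + move=> j; split; [|split].
    * by move/(congr1 size); rewrite size_map size_iota /c addn1.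
    * rewrite map_inj_in_uniq ?iota_uniq // => i1 i2.
      rewrite !mem_iota !add0n => /andP [_ h1] /andP [_ h2] /(congr1 val) /=.
      rewrite !hv //; move/eqP; rewrite eqn_add2l eqn_pmul2r //; exact/eqP.
    * move=> x y /harc hxy; rewrite /e.
      have hne : x != y by apply/eqP => ex; rewrite ex in hxy; lia.
      rewrite hne /=; apply/andP; split; lia.
  + move=> v; exists (Ordinal (ltn_pmod v hk)); split; first by rewrite hmem.
    by move=> j'; rewrite hmem => /eqP h; apply: val_inj.
  + apply: (acyc_rank (f := fun x : 'I_n'.+1 => nat_of_ord x)).
    move=> x y [hne [[j /harc h] | [z [j [/harc h hyz]]]]]; first lia.
    have hne' : nat_of_ord x <> y by move=> ex; apply: hne; exact: val_inj.
    move: hyz; rewrite /e => /andP [/andP [_ h1] h2]; lia.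
- rewrite /num_edges (pair_card (fun a b => e a b && (a < b))).
  have hs := sum_min hk hkn.
  rewrite (reindex_inj rev_ord_inj) /= in hs.
  rewrite (eq_bigr (fun a : 'I_n'.+1 => minn k (n'.+1 - a.+1))); first by rewrite -hs addnK.
  move=> a _; rewrite -card_int; apply: eq_card => b; rewrite !inE /e.
  apply/idP/idP => [/andP [/andP [/andP [h1 h2] h3] h4]|/andP [h1 h2]].
    by apply/andP; split; lia.
  have hne : a != b by apply/eqP => ab; rewrite ab ltnn in h1.
  rewrite hne h1 /=; apply/andP; split; lia.
Qed.

Theorem theorem1 (n k : nat) (hk : (1 <= k)%N) (hkn : (k <= n)%N) :
  (exists (e : rel 'I_n) (P : 'I_k -> seq 'I_n),
      admissible e P /\ num_edges e = (k * n - 'C(k.+1, 2))%N) /\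
  (forall (e : rel 'I_n) (P : 'I_k -> seq 'I_n),
      admissible e P -> (num_edges e <= k * n - 'C(k.+1, 2))%N).
Proof.
split; first exact: lower.
by move=> e P; apply: upper.
Qed.
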